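(* Let $V$ be a finite-dimensional complex vector space with a Hermitian inner product and norm $\|\cdot\|$, let $\mathbf G$ be a finite group of unitary transformations of $V$, let $\mathbf x_0\in V$ with $\|\mathbf x_0\|=1$, fix a subgroup sequence $\{I\}=\mathbf G_0<\mathbf G_1<\cdots<\mathbf G_m=\mathbf G$ and coset leader sets $\operatorname{CL}(\mathbf G_k/\mathbf G_{k-1})$, $1\le k\le m$. If every set $\operatorname{CL}(\mathbf G_k/\mathbf G_{k-1})$ is greed compatible, then the subgroup decoding algorithm decodes robustly (and thus also correctly with some noise).
   Context: $S=\operatorname{Stab}_{\mathbf G}(\mathbf x_0)$; for a subgroup $H$, $\operatorname{Stab}_H(\mathbf x_0)=H\cap S$. Codewords are $g^{-1}\mathbf x_0$, $g\in\mathbf G$. $\operatorname{CL}(\mathbf G_k/\mathbf G_{k-1})$ is a set of representatives of the left cosets of $\mathbf G_{k-1}$ in $\mathbf G_k$ containing $I$. Subgroup decoding algorithm: given $\mathbf r\in V$, set $\mathbf r_0=\mathbf r$; for $k=1,\dots,m$ choose $d_k\in\operatorname{CL}(\mathbf G_k/\mathbf G_{k-1})$ minimizing $\|a\mathbf r_{k-1}-\mathbf x_0\|$ over $a\in\operatorname{CL}(\mathbf G_k/\mathbf G_{k-1})$ (ties broken by a fixed ordering), set $\mathbf r_k=d_k\mathbf r_{k-1}$; output $g'=d_m\cdots d_1$. It decodes robustly if for every $g\in\mathbf G$ and $\mathbf r\in V$ with $\|\mathbf r-g^{-1}\mathbf x_0\|<\|\mathbf r-h^{-1}\mathbf x_0\|$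 for all $h\notin Sg$, the output lies in $Sg$. It decodes correctly with some noise if there is $\delta>0$ such that $\|\mathbf r-g^{-1}\mathbf x_0\|<\delta$ implies the output lies in $Sg$. Fundamental region of a subgroup $H$: $\operatorname{FR}(H)=\{\mathbf x:\|\mathbf x-\mathbf x_0\|<\|h\mathbf x-\mathbf x_0\|\ \forall h\in H\setminus\operatorname{Stab}_H(\mathbf x_0)\}$. For subgroups $H\le K$, a set $\operatorname{CL}$ of left coset representatives of $H$ in $K$ is greed compatible if for every $\mathbf x\in\operatorname{FR}(H)$ there is $c\in\operatorname{CL}$ with $c\mathbf x\in\operatorname{FR}(K)$. *)

(* Defs.v *)
From HB Require Import structures.
From mathcomp Require Import all_boot all_order all_algebra all_fingroup.
Set Implicit Arguments. Unset Strict Implicit. Unset Printing Implicit Defensive.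
Import Order.TTheory GRing.Theory Num.Theory.
Local Open Scope ring_scope.

Section Decoding.
Variable C : numClosedFieldType.
Variable n : nat.
Local Notation V := 'cV[C]_n.

Definition vnorm (x : V) : C := sqrtC (\sum_i `|x i 0| ^+ 2).

Definition adjmx (A : 'M[C]_n) : 'M[C]_n := (map_mx Num.conj A)^T.
Definition unitary (A : 'M[C]_n) : Prop := adjmx A *m A = 1%:M.

Variable gT : finGroupType.
Variable rho : gT -> 'M[C]_n.   (* the group elements act as unitary matrices *)
Variable x0 : V.

Definition Stab (G : {set gT}) : {set gT} := [set g in G | rho g *m x0 == x0].

Definition FR (G H : {set gT}) (x : V) : Prop :=
  forall h, h \in H -> h \notin (H :&: Stab G) ->
    vnorm (x - x0) < vnorm (rho h *m x - x0).

(* CL is a set of representatives of the left cosets of H in K containing 1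
   (as a list, whose order is the fixed tie-breaking order). *)
Definition is_coset_leaders (H K : {set gT}) (CL : seq gT) : Prop :=
  [/\ {subset CL <= K}, (1%g \in CL) &
      forall x, x \in K -> count (fun c => c \in (x *: H)%g) CL = 1%N].

Definition greed_compatible (G H K : {set gT}) (CL : seq gT) : Prop :=
  forall x, FR G H x -> exists2 c, c \in CL & FR G K (rho c *m x).

Definition argmin_first (f : gT -> C) (s : seq gT) : gT :=
  match s with
  | [::] => 1%g
  | a :: s' => foldl (fun b c => if f c < f b then c else b) a s'
  end.

Definition decode (m : nat) (CL : nat -> seq gT) (r : V) : gT :=
  (foldl (fun (p : V * gT) k =>
            let d := argmin_first (fun a => vnorm (rho a *m p.1 - x0)) (CL k) in
            (rho d *m p.1, (d * p.2)%g))
         (r, 1%g) (iota 1 m)).2.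

Definition decodes_robustly (G : {set gT}) (m : nat) (CL : nat -> seq gT) : Prop :=
  forall g r, g \in G ->
    (forall h, h \in G -> h \notin (Stab G :* g)%g ->
       vnorm (r - rho (g^-1)%g *m x0) < vnorm (r - rho (h^-1)%g *m x0)) ->
    decode m CL r \in (Stab G :* g)%g.

Definition decodes_with_noise (G : {set gT}) (m : nat) (CL : nat -> seq gT) : Prop :=
  exists2 delta : C, 0 < delta &
    forall g r, g \in G -> vnorm (r - rho (g^-1)%g *m x0) < delta ->
      decode m CL r \in (Stab G :* g)%g.

End Decoding.

(* Main.v *)
Require Import Defs.
From HB Require Import structures.
From mathcomp Require Import all_boot all_order all_algebra all_fingroup.
Import Order.TTheory GRing.Theory Num.Theory.
Local Open Scope ring_scope.
Set Implicit Arguments. Unset Strict Implicit.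

Lemma vnorm_sum (C : numClosedFieldType) (n : nat) (x : 'cV[C]_n) :
  \sum_i `|x i 0| ^+ 2 = ((map_mx Num.conj x)^T *m x) 0 0.
Proof.
rewrite mxE; apply: eq_bigr => i _.
by rewrite !mxE normCK mulrC.
Qed.

Lemma vnorm_unitary (C : numClosedFieldType) (n : nat) (U : 'M[C]_n) (x : 'cV[C]_n) :
  unitary U -> vnorm (U *m x) = vnorm x.
Proof.
move=> hU; rewrite /vnorm !vnorm_sum map_mxM trmx_mul -mulmxA (mulmxA _ U).
by move: hU; rewrite /unitary /adjmx => ->; rewrite mul1mx.
Qed.

Lemma vnorm_ge0 (C : numClosedFieldType) (n : nat) (x : 'cV[C]_n) : 0 <= vnorm x.
Proof.
by rewrite /vnorm sqrtC_ge0 sumr_ge0 // => i _; rewrite exprn_ge0.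
Qed.

Lemma coord_le_vnorm (C : numClosedFieldType) (n : nat) (x : 'cV[C]_n) j :
  `|x j 0| <= vnorm x.
Proof.
rewrite -(sqrCK (normr_ge0 (x j 0))) /vnorm ler_sqrtC ?qualifE /= ?exprn_ge0 //.
  by rewrite (bigD1 j) //= lerDl sumr_ge0 // => i _; rewrite exprn_ge0.
by rewrite sumr_ge0 // => i _; rewrite exprn_ge0.
Qed.


Lemma foldl_min (C : numClosedFieldType) (gT : finGroupType) (f : gT -> C) (s : seq gT) b :
  (forall x, f x \is Num.real) ->
  let r := foldl (fun b c => if f c < f b then c else b) b s in
  [/\ (r == b) || (r \in s), f r <= f b & forall a, a \in s -> f r <= f a].
Proof.
move=> hr; elim: s b => [|c s IH] b /=; first by rewrite eqxx lexx.
set b' := (if f c < f b then c else b).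
have [hb1 hb2] : f b' <= f b /\ f b' <= f c.
  rewrite /b'; case: ifP => h; first by rewrite ltW.
  by rewrite lexx real_leNgt ?h.
have [h1 h2 h3] := IH b'.
split.
- case/orP: h1 => [/eqP ->|hh]; last by rewrite inE hh !orbT.
  by rewrite /b'; case: ifP; rewrite ?eqxx ?mem_head ?orbT.
- exact: le_trans h2 hb1.
- move=> a; rewrite inE => /orP[/eqP ->|]; first exact: le_trans h2 hb2.
  exact: h3.
Qed.

Lemma argmin_first_spec (C : numClosedFieldType) (gT : finGroupType) (f : gT -> C) (s : seq gT) c :
  (forall x, f x \is Num.real) -> c \in s ->
  argmin_first f s \in s /\ forall a, a \in s -> f (argmin_first f s) <= f a.
Proof.
move=> hr; case: s => [|b s] //= _.
have [h1 h2 h3] := @foldl_min C gT f s b hr.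
split.
- by case/orP: h1 => [/eqP ->|h]; rewrite inE ?eqxx ?h ?orbT.
- move=> a; rewrite inE => /orP[/eqP ->|]; [exact: h2 | exact: h3].
Qed.


Lemma stabP (C : numClosedFieldType) (n : nat) (gT : finGroupType) (rho : gT -> 'M[C]_n)
  (x0 : 'cV[C]_n) (G : {set gT}) g :
  reflect (g \in G /\ rho g *m x0 = x0) (g \in Stab rho x0 G).
Proof. by rewrite inE; apply: (iffP andP) => -[? /eqP ?]; split=> //; apply/eqP. Qed.

Lemma stabM (C : numClosedFieldType) (n : nat) (gT : finGroupType) (rho : gT -> 'M[C]_n)
  (x0 : 'cV[C]_n) (G : {group gT}) :
  {in G &, forall x y, rho (x * y)%g = rho x *m rho y} ->
  {in Stab rho x0 G &, forall s t, (s * t)%g \in Stab rho x0 G}.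
Proof.
move=> rM s t /stabP[sG sx] /stabP[tG tx]; apply/stabP; split; first exact: groupM.
by rewrite rM // -mulmxA tx sx.
Qed.

Lemma rhoVr (C : numClosedFieldType) (n : nat) (gT : finGroupType) (rho : gT -> 'M[C]_n)
  (G : {group gT}) a :
  rho 1%g = 1%:M -> {in G &, forall x y, rho (x * y)%g = rho x *m rho y} -> a \in G ->
  rho a *m rho a^-1%g = 1%:M /\ rho a^-1%g *m rho a = 1%:M.
Proof.
move=> r1 rM aG; rewrite -!rM ?groupV // mulgV mulVg r1 //.
Qed.

Lemma stabV (C : numClosedFieldType) (n : nat) (gT : finGroupType) (rho : gT -> 'M[C]_n)
  (x0 : 'cV[C]_n) (G : {group gT}) :
  rho 1%g = 1%:M -> {in G &, forall x y, rho (x * y)%g = rho x *m rho y} ->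
  {in Stab rho x0 G, forall s, (s^-1)%g \in Stab rho x0 G}.
Proof.
move=> r1 rM s /stabP[sG sx]; apply/stabP; split; first by rewrite groupV.
have [_ h] := rhoVr r1 rM sG.
by rewrite -{1}sx mulmxA h mul1mx.
Qed.

Lemma vnorm_shift (C : numClosedFieldType) (n : nat) (gT : finGroupType) (rho : gT -> 'M[C]_n)
  (x0 : 'cV[C]_n) (G : {group gT}) a r :
  rho 1%g = 1%:M -> {in G &, forall x y, rho (x * y)%g = rho x *m rho y} ->
  (forall g, g \in G -> unitary (rho g)) -> a \in G ->
  vnorm (r - rho a^-1%g *m x0) = vnorm (rho a *m r - x0).
Proof.
move=> r1 rM rU aG; rewrite -(vnorm_unitary (r - rho a^-1%g *m x0) (rU a aG)) mulmxBr mulmxA.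
by have [-> _] := rhoVr r1 rM aG; rewrite mul1mx.
Qed.

Lemma greedy_step (C : numClosedFieldType) (n : nat) (gT : finGroupType) (rho : gT -> 'M[C]_n)
  (x0 : 'cV[C]_n) (G K : {group gT}) (CL : seq gT) c x :
  rho 1%g = 1%:M -> {in G &, forall x y, rho (x * y)%g = rho x *m rho y} ->
  (forall g, g \in G -> unitary (rho g)) -> K \subset G -> {subset CL <= K} ->
  c \in CL -> FR rho x0 G K (rho c *m x) ->
  FR rho x0 G K (rho (argmin_first (fun a => vnorm (rho a *m x - x0)) CL) *m x).
Proof.
move=> r1 rM rU sKG sCL cCL hc.
set d := argmin_first _ _.
have [dCL dmin] := argmin_first_spec (fun a => ger0_real (vnorm_ge0 (rho a *m x - x0))) cCL.
have dK : d \in K := sCL _ dCL.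
have cK : c \in K := sCL _ cCL.
have inG y : y \in K -> y \in G := fun h => subsetP sKG y h.
have tK : (d * c^-1)%g \in K by rewrite groupM ?groupV.
have rtc : rho (d * c^-1)%g *m rho c = rho d.
  by rewrite -rM ?inG ?groupV // mulgKV.
case: (boolP ((d * c^-1)%g \in Stab rho x0 G)) => ht; last first.
  have := hc _ tK; rewrite inE tK /= => /(_ ht).
  rewrite mulmxA rtc => hlt.
  have := dmin c cCL; rewrite -/d => hle.
  by have := lt_le_trans hlt hle; rewrite ltxx.
have /stabP[_ tx0] := ht.
have eqn : vnorm (rho d *m x - x0) = vnorm (rho c *m x - x0).
  rewrite -rtc -mulmxA -{1}tx0 -mulmxBr vnorm_unitary //; apply: rU; exact: inG.
move=> h hK hS; rewrite eqn.
have htK : (h * (d * c^-1))%g \in K by rewrite groupM.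
have htS : (h * (d * c^-1))%g \notin K :&: Stab rho x0 G.
  apply: contra hS => /setIP[_ hh]; apply/setIP; split=> //.
  by have := stabM rM hh (stabV r1 rM ht); rewrite -mulgA mulgV mulg1.
have := hc _ htK htS.
by rewrite mulmxA -rM ?inG // -mulgA mulgKV rM ?inG // -mulmxA.
Qed.


Lemma pos_lb (C : numClosedFieldType) (s : seq C) :
  exists2 d : C, 0 < d & forall a, a \in s -> 0 < a -> d <= a.
Proof.
elim: s => [|a s [d d0 hd]]; first by exists 1.
case: (boolP (0 < a)) => a0; last first.
  by exists d => // b; rewrite inE => /orP[/eqP -> /negPf|]; [rewrite (negPf a0)|exact: hd].
case/orP: (real_leVge (gtr0_real d0) (gtr0_real a0)) => hda.
  by exists d => // b; rewrite inE => /orP[/eqP ->|]; [|exact: hd].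
exists a => // b; rewrite inE => /orP[/eqP -> _|bs b0]; first exact: lexx.
exact: le_trans hda (hd b bs b0).
Qed.

Lemma chain_sub (gT : finGroupType) (G : {group gT}) (m : nat) (Gs : nat -> {group gT}) :
  Gs m = G -> (forall k, (1 <= k <= m)%N -> Gs k.-1 \subset Gs k) ->
  forall k, (k <= m)%N -> Gs k \subset G.
Proof.
move=> hm hs.
have gen d k : (k + d <= m)%N -> Gs k \subset Gs (k + d)%N.
  elim: d => [|d IH] h; first by rewrite ?addn0.
  rewrite addnS in h *; apply: subset_trans (IH (ltnW h)) _.
  by have := hs (k + d).+1%N; rewrite h /= => ->.
by move=> k km; rewrite -hm -(subnKC km); apply: gen; rewrite subnKC.
Qed.


Lemma decode_inv (C : numClosedFieldType) (n : nat) (gT : finGroupType)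
  (G : {group gT}) (rho : gT -> 'M[C]_n) (x0 : 'cV[C]_n)
  (m : nat) (Gs : nat -> {group gT}) (CL : nat -> seq gT) (r : 'cV[C]_n) :
  rho 1%g = 1%:M ->
  {in G &, forall x y, rho (x * y)%g = rho x *m rho y} ->
  (forall g, g \in G -> unitary (rho g)) ->
  (Gs 0%N :=: 1%g) -> Gs m = G ->
  (forall k, (1 <= k <= m)%N -> Gs k.-1 \subset Gs k) ->
  (forall k, (1 <= k <= m)%N -> is_coset_leaders (Gs k.-1) (Gs k) (CL k)) ->
  (forall k, (1 <= k <= m)%N ->
     greed_compatible rho x0 G (Gs k.-1) (Gs k) (CL k)) ->
  forall j, (j <= m)%N ->
  let p := foldl (fun (p : 'cV[C]_n * gT) k =>
            let d := argmin_first (fun a => vnorm (rho a *m p.1 - x0)) (CL k) in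
            (rho d *m p.1, (d * p.2)%g))
         (r, 1%g) (iota 1 j) in
  [/\ p.2 \in G, p.1 = rho p.2 *m r & FR rho x0 G (Gs j) p.1].
Proof.
move=> r1 rM rU G0 Gm hs hCL hgc.
have sG := chain_sub Gm hs.
elim=> [|j IH] hj.
  split; rewrite ?group1 ?r1 ?mul1mx //.
  move=> h; rewrite G0 inE => /eqP -> H1; exfalso; move: H1.
  by rewrite !inE eqxx group1 r1 mul1mx eqxx.
have [p2G p1E pFR] := IH (ltnW hj).
have -> : iota 1 j.+1 = iota 1 j ++ [:: j.+1] by rewrite -[j.+1]addn1 iotaD /= add1n addn1.
rewrite foldl_cat /=.
set p := foldl _ _ _ in p2G p1E pFR *.
have k1 : (1 <= j.+1 <= m)%N by rewrite hj.
have [sCL _ _] := hCL _ k1.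
have [c cCL cFR] := hgc _ k1 p.1 pFR.
have sKG := sG _ hj.
have inG y : y \in Gs j.+1 -> y \in G := fun h => subsetP sKG y h.
have := argmin_first_spec (fun a => ger0_real (vnorm_ge0 (rho a *m p.1 - x0))) cCL.
set d := argmin_first _ _ => -[dCL _].
have dG := inG _ (sCL _ dCL).
split.
- by rewrite /= groupM.
- by rewrite /= p1E mulmxA rM.
- exact: greedy_step r1 rM rU sKG sCL cCL cFR.
Qed.

Unset Implicit Arguments. Set Strict Implicit.

Theorem theoremB (C : numClosedFieldType) (n : nat) (gT : finGroupType)
  (G : {group gT}) (rho : gT -> 'M[C]_n) (x0 : 'cV[C]_n)
  (m : nat) (Gs : nat -> {group gT}) (CL : nat -> seq gT) :
  rho 1%g = 1%:M ->
  {in G &, forall x y, rho (x * y)%g = rho x *m rho y} ->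
  {in G &, injective rho} ->
  (forall g, g \in G -> unitary (rho g)) ->
  vnorm x0 = 1 ->
  (Gs 0%N :=: 1%g) -> Gs m = G ->
  (forall k, (1 <= k <= m)%N -> Gs k.-1 \subset Gs k) ->
  (forall k, (1 <= k <= m)%N -> is_coset_leaders (Gs k.-1) (Gs k) (CL k)) ->
  (forall k, (1 <= k <= m)%N ->
     greed_compatible rho x0 G (Gs k.-1) (Gs k) (CL k)) ->
  decodes_robustly rho x0 G m CL /\ decodes_with_noise rho x0 G m CL.
Proof.
move=> r1 rM _ rU _ G0 Gm hs hCL hgc.
have notstab g h : g \in G -> h \in G -> h \notin (Stab rho x0 G :* g)%g ->
    (g * h^-1)%g \notin Stab rho x0 G.
  move=> gG hG; rewrite mem_rcoset; apply: contra => hk.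
  by have := stabV r1 rM hk; rewrite invMg invgK.
have rob : decodes_robustly rho x0 G m CL.
  move=> g r gG H.
  have [p2G p1E pFR] := decode_inv r r1 rM rU G0 Gm hs hCL hgc (leqnn m).
  rewrite /decode; set p := foldl _ _ _ in p2G p1E pFR *.
  apply: contraT => hn.
  have h1 := H _ p2G hn.
  rewrite !(vnorm_shift _ _ r1 rM rU) // -p1E in h1.
  have hG : (g * p.2^-1)%g \in G by rewrite groupM ?groupV.
  have hS : (g * p.2^-1)%g \notin G :&: Stab rho x0 G.
    by apply: contra (notstab _ _ gG p2G hn) => /setIP[].
  move: pFR; rewrite Gm => pFR.
  have := pFR _ hG hS.
  rewrite p1E mulmxA -rM ?groupV // mulgKV -p1E => h2.
  by have := lt_trans h1 h2; rewrite ltxx.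
split=> //.
pose S := [seq `|(x0 - rho k *m x0) j 0| | k <- enum G, j <- enum 'I_n].
have [d d0 hd] := pos_lb S.
exists (d / 2); first by rewrite divr_gt0 // ltr0n.
move=> g r gG hr; apply: rob => // h hG hn.
have kG : (g * h^-1)%g \in G by rewrite groupM ?groupV.
have kS := notstab _ _ gG hG hn.
rewrite (vnorm_shift _ _ r1 rM rU gG) in hr *.
rewrite -[X in _ < X](vnorm_unitary _ (rU g gG)) mulmxBr mulmxA -rM ?groupV //.
set k := (g * h^-1)%g in kG kS *.
set e := rho g *m r - x0 in hr *.
set dv := x0 - rho k *m x0.
have -> : rho g *m r - rho k *m x0 = e + dv by rewrite /e /dv addrA subrK.
have [j hj] : exists j, dv j 0 != 0.
  case: (pickP (fun j => dv j 0 != 0)) => [j hj|hnone]; first by exists j.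
  exfalso; move: kS; rewrite inE kG /= => /eqP; apply.
  apply: esym; apply: subr0_eq; apply/matrixP => i i'.
  by rewrite ord1 [RHS]mxE; have /= := hnone i => /negbFE/eqP.
have hdj : d <= `|dv j 0|.
  apply: hd; last by rewrite normr_gt0.
  by apply: allpairs_f; rewrite mem_enum.
have he := coord_le_vnorm e j.
apply: (lt_le_trans _ (coord_le_vnorm (e + dv) j)).
rewrite mxE addrC.
apply: (lt_le_trans _ (lerB_normD _ _)).
apply: (lt_le_trans _ (lerB hdj he)).
rewrite ltrBrDr [d]splitr; exact: ltrD.
Qed.
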